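(* Let $q$ be a prime power, $1\le k\le n-1$, and let $\mathcal{L}$ be a Cameron-Liebler $k$-set of $\mathrm{AG}(n,q)$ with parameter $x$. Then for every $k$-spread $\mathcal{S}$ of $\mathrm{AG}(n,q)$ we have $|\mathcal{L}\cap\mathcal{S}|=x$.
   Context: $\mathrm{AG}(n,q)$ is $\mathrm{PG}(n,q)$ with a hyperplane $\pi_\infty$ removed; affine points are points outside $\pi_\infty$, affine $k$-spaces are $k$-dimensional projective subspaces not contained in $\pi_\infty$ (identified with their sets of affine points). A $k$-spread of $\mathrm{AG}(n,q)$ is a set of affine $k$-spaces that pairwise share no affine point and together cover all affine points. With $A_n$ the incidence matrix of affine points versus affine $k$-spaces, a set $\mathcal{L}$ of affine $k$-spaces is a Cameron-Liebler $k$-set of $\mathrm{AG}(n,q)$ if its characteristic vector lies in the real row space $\mathrm{Im}(A_n^T)$; its parameter is $x=|\mathcal{L}|/\left[{n\atop k}\right]_q$, where $\left[{a\atop b}\right]_q=\frac{(q^a-1)\cdots(q^{a-b+1}-1)}{(q^b-1)\cdots(q-1)}$. *)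

(* Defs.v *)
From HB Require Import structures.
From mathcomp Require Import all_boot all_order all_algebra all_field.
From mathcomp Require Import reals.
Set Implicit Arguments. Unset Strict Implicit. Unset Printing Implicit Defensive.
Import GRing.Theory Num.Theory.
Local Open Scope ring_scope.

(* AG(n,q) is modelled as the vector space 'rV[F]_n over a finite field F
   with q = #|F| elements; affine points are vectors, and an affine k-space
   is identified with its set of affine points, i.e. a coset a + W of a
   k-dimensional linear subspace W (row space of a square matrix W). *)

Definition is_affine_space (F : finFieldType) (n k : nat)
  (A : {set 'rV[F]_n}) : bool :=
  [exists a : 'rV[F]_n, exists W : 'M[F]_n,
     (\rank W == k) && (A == [set v | (v - a <= W)%MS])].

Definition affine_spaces (F : finFieldType) (n k : nat)
  : {set {set 'rV[F]_n}} := [set A | @is_affine_space F n k A].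

Definition is_spread (F : finFieldType) (n k : nat)
  (S : {set {set 'rV[F]_n}}) : Prop :=
  [/\ S \subset @affine_spaces F n k,
      (forall A B, A \in S -> B \in S -> A != B -> [disjoint A & B])
    & (forall v : 'rV[F]_n, exists2 A, A \in S & v \in A)].

(* Cameron-Liebler k-set: the characteristic vector of L (indexed by affine
   k-spaces) lies in the real row space Im(A_n^T), i.e. it is a real linear
   combination of the rows of the point/k-space incidence matrix A_n. *)
Definition is_CL_set (R : realType) (F : finFieldType) (n k : nat)
  (L : {set {set 'rV[F]_n}}) : Prop :=
  L \subset @affine_spaces F n k /\
  exists c : 'rV[F]_n -> R,
    forall A, A \in @affine_spaces F n k ->
      ((A \in L)%:R : R) = \sum_(P : 'rV[F]_n) c P * (P \in A)%:R.

Definition gauss_binom (R : realType) (q a b : nat) : R :=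
  \prod_(i < b) ((q%:R ^+ (a - i) - 1) / (q%:R ^+ (i.+1) - 1)).

Definition CL_parameter (R : realType) (F : finFieldType) (n k : nat)
  (L : {set {set 'rV[F]_n}}) : R :=
  (#|L|)%:R / gauss_binom R #|F| n k.

(* Main.v *)
Require Import Defs.
From HB Require Import structures.
From mathcomp Require Import all_boot all_order all_algebra all_field.
From mathcomp Require Import reals.
Import Order.TTheory GRing.Theory Num.Theory.
Local Open Scope ring_scope.

Section S.
Variable F : finFieldType.
Local Notation p := #|F|.

Lemma card_fr m n : (m <= n)%N ->
  #|[pred A : 'M[F]_(m, n) | \rank A == m]| = (\prod_(i < m) (p ^ n - p ^ i))%N.
Proof.
elim: m => [_ | m IHm le_mn].
  rewrite big_ord0 (@eq_card1 _ (0%R : 'M[F]_(0, n))) // => A.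
  by rewrite [A]flatmx0 !inE mxrank.unlock !eqxx.
rewrite big_ord_recr /= -IHm ?(ltnW le_mn) //.
pose fr m := [pred A : 'M[F]_(m, n) | \rank A == m].
rewrite -sum_nat_const /= -sum1_card -add1n.
rewrite (partition_big dsubmx (fr m)) /= => [|A]; last first.
  rewrite !inE -{1}(vsubmxK A); move: {A}(_ A) (_ A) => Ad Au Afull.
  rewrite eqn_leq rank_leq_row -(leq_add2l (\rank Au)) -mxrank_sum_cap.
  rewrite {1 3}[@mxrank]lock addsmxE (eqnP Afull) -lock -addnA.
  by rewrite leq_add ?rank_leq_row ?leq_addr.
apply: eq_bigr => A rAm; rewrite (reindex (col_mx^~ A)) /=; last first.
  exists usubmx => [v _ | vA]; first by rewrite col_mxKu.
  by case/andP=> _ /eqP <-; rewrite vsubmxK.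
transitivity #|~: [set v *m A | v in 'rV_m]|; last first.
  rewrite cardsCs setCK card_imset ?card_mx ?card_ord ?mul1n //.
  have [B AB1] := row_freeP rAm; apply: can_inj (mulmx^~ B) _ => v.
  by rewrite -mulmxA AB1 mulmx1.
rewrite -sum1_card; apply: eq_bigl => v; rewrite !inE col_mxKd eqxx.
rewrite andbT eqn_leq rank_leq_row /= -(leq_add2r (\rank (v :&: A)%MS)).
rewrite -addsmxE mxrank_sum_cap (eqnP rAm) addnAC leq_add2r.
rewrite (ltn_leqif (mxrank_leqif_sup _)) ?capmxSl // sub_capmx submx_refl.
by congr (~~ _); apply/submxP/imsetP=> [] [u]; exists u.
Qed.

Variable n : nat.
Definition subs m (A : 'M[F]_(m, n)) : {set 'rV[F]_n} := [set v | (v <= A)%MS].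
Arguments subs {m}.
Definition subsp k : {set {set 'rV[F]_n}} :=
  [set V | [exists W : 'M[F]_n, (\rank W == k) && (V == subs W)]].

Lemma subs_eq m1 m2 (A : 'M_(m1, n)) (B : 'M_(m2, n)) :
  (subs A == subs B) = (A == B)%MS.
Proof.
apply/eqP/andP => [E | [AB BA]].
  split; apply/row_subP => i.
    have : row i A \in subs A by rewrite inE row_sub.
    by rewrite E inE.
  have : row i B \in subs B by rewrite inE row_sub.
  by rewrite -E inE.
apply/setP => v; rewrite !inE; apply/idP/idP => H.
  exact: submx_trans H AB.
exact: submx_trans H BA.
Qed.

Lemma count_subsp k :
  (#|subsp k| * #|[pred A : 'M[F]_(k, k) | \rank A == k]|
   = #|[pred A : 'M[F]_(k, n) | \rank A == k]|)%N.
Proof.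
rewrite -sum_nat_const -[RHS]sum1_card.
rewrite (partition_big (@subs k) (mem (subsp k))) /=; last first.
  move=> A; rewrite !inE => rA; apply/existsP; exists <<A>>%MS.
  rewrite mxrank_gen rA /=; rewrite subs_eq; exact/eqmxP/eqmx_sym/genmxE.
apply: eq_bigr => V; rewrite inE => /existsP [W /andP [rW /eqP ->]].
have [W0 rW0 eW0] : exists2 W0 : 'M[F]_(k, n), \rank W0 == k & (W0 == W)%MS.
  move: (eqP rW) => <-; exists (row_base W); first exact: row_base_free.
  exact/eqmxP/eq_row_base.
have fW0 : row_free W0 by [].
transitivity #|[set M *m W0 | M in [pred A : 'M[F]_(k, k) | \rank A == k]]|.
  rewrite card_in_imset //; move=> M1 M2 _ _.
  have [B AB1] := row_freeP fW0 => E.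
  by rewrite -[M1]mulmx1 -AB1 mulmxA E -mulmxA AB1 mulmx1.
rewrite -sum1_card; apply: eq_bigl => A.
have -> : (subs A == subs W) = (A == W0)%MS.
  rewrite subs_eq; apply/idP/idP => /eqmxP H; apply/eqmxP.
    exact: eqmx_trans H (eqmx_sym (eqmxP eW0)).
  exact: eqmx_trans H (eqmxP eW0).
apply/imsetP/andP => [[M /[!inE] rM ->] | [rA eA]].
  rewrite mxrankMfree // (eqP rM); split => //.
  by rewrite -(mxrank_leqif_eq (submxMl _ _)).2 mxrankMfree // (eqP rM) (eqP rW0).
exists (A *m pinvmx W0); last by rewrite mulmxKpV //; case/andP: eA.
rewrite inE -(mxrankMfree _ fW0) mulmxKpV //; case/andP: eA => //.
Qed.
End S.
Arguments subs {F n m}.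

Lemma sum_ind (R : numDomainType) (T : finType) (B : {set T}) (Q : pred T) :
  \sum_(A in B) ((Q A)%:R : R) = (#|[set A in B | Q A]|)%:R.
Proof.
rewrite (bigID (fun A => Q A)) /= [X in _ + X]big1 ?addr0; last first.
  by move=> A /andP [_ /negbTE ->].
rewrite -sum1_card natr_sum; apply: eq_big => [A|A /andP [_ ->]] //.
by rewrite !inE.
Qed.

Lemma card_through (F : finFieldType) (n k : nat) (P : 'rV[F]_n) :
  #|[set A in affine_spaces F n k | P \in A]| = #|subsp F n k|.
Proof.
pose T (V : {set 'rV[F]_n}) := [set v | v - P \in V].
have Tinj : injective T.
  move=> V1 V2 E; apply/setP => v; move/setP: E => /(_ (v + P)).
  by rewrite !inE addrK.
suff -> : [set A in affine_spaces F n k | P \in A] = T @: subsp F n k.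
  by rewrite card_imset.
apply/setP => A; rewrite !inE; apply/andP/imsetP.
  case; rewrite ?inE => /existsP [a /existsP [W /andP [rW /eqP ->]]].
  rewrite ?inE => Pa.
  exists (subs W); first by rewrite inE; apply/existsP; exists W; rewrite rW eqxx.
  apply/setP => v; rewrite !inE; apply/idP/idP => H.
    have -> : v - P = (v - a) + - (P - a) by rewrite opprB addrA subrK.
    by rewrite addmx_sub // (eqmx_opp (P - a)).
  have -> : v - a = (v - P) + (P - a) by rewrite addrA subrK.
  by rewrite addmx_sub.
case=> V; rewrite ?inE => /existsP [W /andP [rW /eqP ->]] ->; split.
  rewrite ?inE; apply/existsP; exists P; apply/existsP; exists W.
  by rewrite rW /=; apply/eqP/setP => v; rewrite !inE.
by rewrite !inE subrr sub0mx.
Qed.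

Lemma gauss_subsp (R : realType) (F : finFieldType) (n k : nat) :
  (k <= n)%N -> gauss_binom R #|F| n k = (#|subsp F n k|)%:R.
Proof.
move=> kn.
have q1 : 1 < (#|F|%:R : R) by rewrite ltr1n card_finNzRing_gt1.
have q0 : (#|F|%:R : R) != 0 by rewrite gt_eqF // (lt_trans ltr01 q1).
have qm1 : forall m, (0 < m)%N -> (#|F|%:R : R) ^+ m - 1 != 0.
  by move=> m m0; rewrite subr_eq0 gt_eqF // exprn_egt1 // -lt0n.
have Hc := count_subsp F n k.
rewrite card_fr // card_fr // in Hc.
have HR := congr1 (fun m => (m%:R : R)) Hc; rewrite /= natrM !natr_prod in HR.
have fact : forall m (i : 'I_k), (i <= m)%N -> (((#|F| ^ m - #|F| ^ i)%N)%:R : R)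
    = (#|F|%:R : R) ^+ i * ((#|F|%:R : R) ^+ (m - i) - 1).
  move=> m i im.
  rewrite natrB; last by rewrite leq_pexp2l // ltnW // card_finNzRing_gt1.
  by rewrite !natrX mulrBr mulr1 -exprD subnKC.
rewrite [X in _ * X = _](eq_bigr (fun i : 'I_k => (#|F|%:R : R) ^+ i * ((#|F|%:R : R) ^+ (k - i) - 1))) in HR; last first.
  by move=> i _; rewrite fact // ltnW.
rewrite [X in _ = X](eq_bigr (fun i : 'I_k => (#|F|%:R : R) ^+ i * ((#|F|%:R : R) ^+ (n - i) - 1))) in HR; last first.
  by move=> i _; rewrite fact // ltnW // (leq_trans (ltn_ord i) kn).
rewrite !big_split /= in HR.
have Qp0 : \prod_(i < k) (#|F|%:R : R) ^+ i != 0.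
  by rewrite prodf_seq_neq0; apply/allP => i _; rewrite expf_neq0.
have b0 : \prod_(i < k) ((#|F|%:R : R) ^+ (k - i) - 1) != 0.
  by rewrite prodf_seq_neq0; apply/allP => i _ /=; rewrite qm1 // subn_gt0.
have E : (#|subsp F n k|)%:R * \prod_(i < k) ((#|F|%:R : R) ^+ (k - i) - 1)
    = \prod_(i < k) ((#|F|%:R : R) ^+ (n - i) - 1).
  by apply: (mulfI Qp0); rewrite -HR mulrCA.
have bb : \prod_(i < k) ((#|F|%:R : R) ^+ (k - i) - 1)
    = \prod_(i < k) ((#|F|%:R : R) ^+ i.+1 - 1).
  rewrite (reindex_inj rev_ord_inj) /=; apply: eq_bigr => i _.
  by rewrite subKn.
rewrite /gauss_binom big_split /= prodfV -bb -E mulfK //.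
Qed.

Lemma gauss_ne0 (R : realType) (F : finFieldType) (n k : nat) :
  (k <= n - 1)%N -> gauss_binom R #|F| n k != 0.
Proof.
move=> kn.
set q : R := #|F|%:R.
have q1 : 1 < q by rewrite ltr1n card_finNzRing_gt1.
have qm1 : forall m, (0 < m)%N -> q ^+ m - 1 != 0.
  by move=> m m0; rewrite subr_eq0 gt_eqF // exprn_egt1 // -lt0n.
rewrite prodf_seq_neq0; apply/allP => i _ /=.
rewrite mulf_neq0 ?invr_eq0 ?qm1 //.
rewrite subn_gt0 (leq_trans (ltn_ord i)) //.
by apply: (leq_trans kn); rewrite leq_subr.
Qed.

Theorem lemma3p2 (R : realType) (F : finFieldType) (n k : nat)
  (L : {set {set 'rV[F]_n}}) (x : R) :
  (1 <= k)%N -> (k <= n - 1)%N ->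
  @is_CL_set R F n k L -> x = @CL_parameter R F n k L ->
  forall S : {set {set 'rV[F]_n}}, @is_spread F n k S ->
  (#|L :&: S|)%:R = x.
Proof.
move=> k1 kn [LAS [c Hc]] -> S [SAS Sdisj Scov].
have kn' : (k <= n)%N by apply: (leq_trans kn); rewrite leq_subr.
have cardI : forall S' : {set {set 'rV[F]_n}},
    (#|L :&: S'|)%:R = \sum_(A in S') ((A \in L)%:R : R).
  by move=> S'; rewrite sum_ind; congr (_%:R); apply: eq_card => A; rewrite !inE andbC.
have key : forall S' : {set {set 'rV[F]_n}}, S' \subset affine_spaces F n k ->
    \sum_(A in S') ((A \in L)%:R : R) =
    \sum_(P : 'rV[F]_n) c P * \sum_(A in S') ((P \in A)%:R : R).
  move=> S' sub.
  rewrite (eq_bigr (fun A : {set 'rV[F]_n} => \sum_(P : 'rV[F]_n) c P * ((P \in A)%:R : R))); last first.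
    by move=> A AS'; apply: Hc; exact: (subsetP sub).
  by rewrite exchange_big /=; apply: eq_bigr => P _; rewrite mulr_sumr.
have Hsum : forall P, \sum_(A in S) ((P \in A)%:R : R) = 1.
  move=> P; have [A0 A0S PA0] := Scov P.
  rewrite (bigD1 A0) //= PA0 big1 ?addr0 // => A /andP [AS' nA].
  by rewrite (disjointFr (Sdisj _ _ A0S AS' _)) // eq_sym.
rewrite cardI key // (eq_bigr (fun P => c P)); last by move=> P _; rewrite Hsum mulr1.
rewrite /CL_parameter -(setIidPl LAS) cardI key //.
rewrite [in RHS](eq_bigr (fun P => c P * (#|subsp F n k|)%:R)); last first.
  by move=> P _; have /= -> := sum_ind R _ (affine_spaces F n k) (fun A : {set 'rV[F]_n} => P \in A); rewrite card_through.
rewrite -mulr_suml -(gauss_subsp R F n k kn') mulfK //.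
exact: gauss_ne0.
Qed.
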